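(* Let $\mathcal{A}$ be a finite or countable alphabet, $\mathcal{M}$ a countable set of probability measures on $\mathcal{A}^\infty$, $w:\mathcal{M}\to(0,1]$ a prior with $\sum_\nu w_\nu=1$, $\xi$ the Bayes mixture and $\mu\in\mathcal{M}$. If $\mathrm{Ent}(w)<\infty$, then $\mathbb{E}_\mu C_\infty\le \mathrm{Ent}(w)/w_\mu$ and $\lim_{t\to\infty}c_t=0$ with $\mu$-probability $1$.
   Context: $\mathcal{A}^\infty$ carries the $\sigma$-algebra generated by cylinders $\Gamma_x=\{x\omega\}$; for a measure $\rho$, $\rho(x):=\rho(\Gamma_x)$, $\rho(y|x):=\rho(xy)/\rho(x)$. Bayes mixture: $\xi(A):=\sum_{\nu\in\mathcal{M}}w_\nu\nu(A)$; posterior $w_\nu(x):=w_\nu\nu(x)/\xi(x)$. Entropy $\mathrm{Ent}(w):=-\sum_\nu w_\nu\ln w_\nu$ (natural logs). For a finite string $x$ and $\nu\in\mathcal{M}$, $d_x(\nu,\xi):=\sum_{a\in\mathcal{A}}\nu(a|x)\ln\frac{\nu(a|x)}{\xi(a|x)}$. For $\omega\in\mathcal{A}^\infty$, $c_t(\omega):=\sum_{\nu\in\mathcal{M}}w_\nu(\omega_{<t})\,d_{\omega_{<t}}(\nu,\xi)$ where $\omega_{<t}=\omega_1\cdots\omega_{t-1}$, and $C_\infty:=\sum_{t=1}^\infty c_t$. $\mathbb{E}_\mu$ denotes expectation w.r.t. $\mu$. *)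

(* Defs.v *)
From HB Require Import structures.
From mathcomp Require Import all_boot all_order all_algebra.
From mathcomp Require Import all_classical all_reals all_analysis.
Set Implicit Arguments. Unset Strict Implicit. Unset Printing Implicit Defensive.
Import Order.TTheory GRing.Theory Num.Theory.
Local Open Scope classical_set_scope.
Local Open Scope ring_scope.

Section Defs.
Variables (A : pointedType).

(** omega_{<n+1} = omega_1 ... omega_n ; we index omega from 0 *)
Definition prefix (om : nat -> A) (n : nat) : seq A := [seq om i | i <- iota 0 n].

Definition cyl (x : seq A) : set (nat -> A) := [set om | prefix om (size x) = x].

Definition cylinders : set (set (nat -> A)) := [set cyl x | x in [set: seq A]].

Definition seqspace := g_sigma_algebraType cylinders.
End Defs.


Section Mixture.
Variables (A : pointedType) (R : realType) (I : choiceType).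
Variables (nu : I -> probability (seqspace A) R) (w : I -> R).
Local Open Scope ereal_scope.

(** rho(x) := rho(Gamma_x) (real-valued; probability measures are finite) *)
Definition cylm (P : set (seqspace A) -> \bar R) (x : seq A) : R := fine (P (cyl x)).

Definition condm (P : set (seqspace A) -> \bar R) (a : A) (x : seq A) : R :=
  (cylm P (rcons x a) / cylm P x)%R.

Definition xi (S : set (seqspace A)) : \bar R :=
  \esum_(i in [set: I]) (w i)%:E * nu i S.

Definition post (i : I) (x : seq A) : R := (w i * cylm (nu i) x / cylm xi x)%R.

Definition Ent : \bar R := \esum_(i in [set: I]) (- (w i * ln (w i)))%:E.

(** d_x(nu, xi) := sum_a nu(a|x) ln (nu(a|x)/xi(a|x)); the (possibly infinite)
    series over the countable alphabet is taken as
    (sum of positive parts) - (sum of negative parts) *)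
Definition dterm (i : I) (x : seq A) (a : A) : R :=
  (condm (nu i) a x * ln (condm (nu i) a x / condm xi a x))%R.

Definition dKL (i : I) (x : seq A) : \bar R :=
  \esum_(a in [set: A]) (Num.max (dterm i x a) 0%R)%:E
  - \esum_(a in [set: A]) (Num.max (- dterm i x a)%R 0%R)%:E.

(** c_t(omega) := sum_nu w_nu(omega_{<t}) d_{omega_{<t}}(nu, xi), t >= 1;
    omega_{<t} = omega_1 ... omega_{t-1} = prefix omega (t-1) *)
Definition c (t : nat) (om : seqspace A) : \bar R :=
  \esum_(i in [set: I]) (post i (prefix om t.-1))%:E * dKL i (prefix om t.-1).

Definition Cinf (om : seqspace A) : \bar R := \sum_(1 <= t <oo) c t om.

End Mixture.

(* Main.v *)
Require Import Defs.
From HB Require Import structures.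
From mathcomp Require Import all_boot all_order all_algebra.
From mathcomp Require Import all_classical all_reals all_analysis.
From mathcomp Require Import measurable_realfun.
Import Order.TTheory GRing.Theory Num.Theory.
Local Open Scope classical_set_scope.
Local Open Scope ring_scope.
Set Implicit Arguments. Unset Strict Implicit. Unset Printing Implicit Defensive.
From mathcomp.algebra_tactics Require Import ring lra.
Section Cyl.
Variable (A : pointedType).

Lemma size_prefix (om : nat -> A) n : size (Defs.prefix om n) = n.
Proof. by rewrite /Defs.prefix size_map size_iota. Qed.

Lemma prefixS (om : nat -> A) n : Defs.prefix om n.+1 = rcons (Defs.prefix om n) (om n).
Proof. by rewrite /Defs.prefix -addn1 iotaD map_cat cats1 add0n. Qed.

Lemma cylE (x : seq A) (om : nat -> A) : cyl x om <-> Defs.prefix om (size x) = x.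
Proof. by []. Qed.

Lemma cyl_nil : cyl ([::] : seq A) = setT.
Proof. by apply/seteqP; split => // om _; rewrite /cyl /= /Defs.prefix. Qed.

Lemma cyl_rcons (x : seq A) a (om : nat -> A) :
  cyl (rcons x a) om <-> (cyl x om /\ om (size x) = a).
Proof.
rewrite /cyl /= size_rcons prefixS; split.
  by move/eqP; rewrite eqseq_rcons => /andP[/eqP -> /eqP ->].
by case=> -> ->.
Qed.

Lemma cyl_bigcup (x : seq A) : cyl x = \bigcup_(a in setT) cyl (rcons x a).
Proof.
apply/seteqP; split => om.
  by move=> h; exists (om (size x)) => //; apply/cyl_rcons.
by case=> a _ /cyl_rcons[].
Qed.

Lemma cyl_triv (x : seq A) : trivIset setT (fun a => cyl (rcons x a)).
Proof.
move=> a b _ _ [om [/cyl_rcons[_ <-] /cyl_rcons[_ <-]]] //.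
Qed.

Lemma cyl_prefix (om : nat -> A) (x : seq A) n :
  size x = n -> (cyl x om <-> x = Defs.prefix om n).
Proof. by move=> <-; rewrite /cyl /=; split => ->//; rewrite size_prefix. Qed.

Lemma cyl_measurable (x : seq A) : measurable (cyl x : set (seqspace A)).
Proof. by apply: sub_sigma_algebra; exists x. Qed.

Lemma countable_inj (U : Type) : countable [set: U] ->
  exists f : U -> nat, injective f.
Proof.
move=> /countable_injP[f hf]; exists f => u v; apply: hf; exact: in_setT.
Qed.

Lemma countable_seq : countable [set: A] -> countable [set: seq A].
Proof.
move=> /countable_inj[f hf]; apply/countable_injP.
exists (fun s => pickle (map f s)) => s t _ _ /(pcan_inj pickleK).
by apply: inj_map.
Qed.

End Cyl.

Lemma cyl_indicE (R : realType) (A : pointedType) (x : seq A) :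
  measurable_fun [set: seqspace A]
    (fun om : seqspace A => ((\1_(cyl x : set (seqspace A)) om : R)%:E)).
Proof.
have mc := cyl_measurable x.
have := @measurable_indic _ (seqspace A) R setT _ mc.
move=> h.
exact: (proj2 (measurable_EFinP _ _) h).
Qed.

Section Countable.
Local Open Scope ereal_scope.

Lemma inj_inv (U : choiceType) (u0 : U) (f : U -> nat) : injective f ->
  exists g : nat -> U, cancel f g.
Proof.
move=> finj; exists (fun n => xget u0 [set u | f u = n]) => u.
by apply: xget_unique => // v /finj.
Qed.

Lemma countable_enum (U : choiceType) (u0 : U) : countable [set: U] ->
  exists f : U -> nat, exists g : nat -> U, cancel f g.
Proof.
move=> /countable_inj[f finj]; have [g fK] := inj_inv u0 finj.
by exists f, g.
Qed.

Lemma esum_enum (R : realType) (U : choiceType) (f : U -> nat) (g : nat -> U)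
  (a : U -> \bar R) : cancel f g -> (forall u, 0 <= a u) ->
  \esum_(u in [set: U]) a u = \sum_(i <oo | i \in range f) a (g i).
Proof.
move=> fK a0; rewrite -esum_set_image//.
- congr esum; apply/seteqP; split => // u _; exists (f u); last exact: fK.
  by exists u.
- by move=> n m; rewrite !inE => -[u _ <-] [v _ <-]; rewrite !fK; move->.
Qed.

Lemma measure_esum d (T : measurableType d) (R : realType) (U : choiceType)
  (mu : {measure set T -> \bar R}) (F : U -> set T) :
  countable [set: U] -> (forall u, measurable (F u)) -> trivIset setT F ->
  mu (\bigcup_(u in setT) F u) = \esum_(u in setT) mu (F u).
Proof.
move=> cU mF tF.
have [[u0 _]|nU] := pselect (exists u : U, True); last first.
  have -> : [set: U] = set0 by apply/seteqP; split => // u; case: nU; exists u.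
  by rewrite bigcup_set0 measure0 esum_set0.
have [f [g fK]] := countable_enum u0 cU.
rewrite (esum_enum fK)//.
have -> : \bigcup_(u in setT) F u = \bigcup_(n in range f) F (g n).
  apply/seteqP; split => x.
    by case=> u _ Fx; exists (f u); [exists u|rewrite fK].
  by case=> n _ Fx; exists (g n).
rewrite (measure_bigcup _ _ (fun n => F (g n)))// => n m [u _ <-] [v _ <-].
rewrite !fK => /(tF u v I I) ->//.
Qed.

Lemma integral_esum d (T : measurableType d) (R : realType) (U : choiceType)
  (mu : {measure set T -> \bar R}) (D : set T) (h : U -> T -> \bar R) :
  measurable D -> countable [set: U] ->
  (forall u, measurable_fun D (h u)) -> (forall u x, 0 <= h u x) ->
  \int[mu]_(x in D) (\esum_(u in setT) h u x) =
  \esum_(u in setT) \int[mu]_(x in D) h u x.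
Proof.
move=> mD cU mh h0.
have [[u0 _]|nU] := pselect (exists u : U, True); last first.
  have -> : [set: U] = set0 by apply/seteqP; split => // u; case: nU; exists u.
  by rewrite esum_set0 integral0_eq// => x _; rewrite esum_set0.
have [f [g fK]] := countable_enum u0 cU.
rewrite (esum_enum fK); last by move=> u; apply: integral_ge0.
under eq_integral do rewrite (esum_enum fK)// eseries_mkcond.
rewrite eseries_mkcond integral_nneseries//.
- apply: congr_lim; apply/funext => n; apply: eq_bigr => i _.
  by case: ifP => _ //; rewrite integral0_eq.
- by move=> n; case: (n \in range f) => //; exact: measurable_cst.
- by move=> n x _; case: (n \in range f).
Qed.

End Countable.
Section EsumLemmas.
Local Open Scope ereal_scope.
Context (R : realType).

Lemma esumZl (T : choiceType) (S : set T) (a : T -> \bar R) (r : R) :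
  (forall i, 0 <= a i) -> (0 <= r)%R ->
  \esum_(i in S) (r%:E * a i) = r%:E * \esum_(i in S) a i.
Proof.
move=> a0 r0; rewrite /esum -ereal_supZl//; last first.
  by apply/set0P; exists 0; exists set0; [exact: fsets_set0|rewrite fsbig_set0].
congr ereal_sup; apply/seteqP; split => z.
- case=> X [fX XS] <-.
  exists (\sum_(x \in X) a x); first by exists X.
  by rewrite !fsbig_finite// ge0_sume_distrr.
- case=> _ [X [fX XS] <-] <-.
  by exists X => //; rewrite !fsbig_finite// ge0_sume_distrr.
Qed.

Lemma esum_swap (T1 T2 : choiceType) (P : set T1) (Q : set T2)
  (a : T1 -> T2 -> \bar R) : (forall i j, 0 <= a i j) ->
  \esum_(i in P) \esum_(j in Q) a i j = \esum_(j in Q) \esum_(i in P) a i j.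
Proof.
move=> a0; rewrite !esum_esum//.
rewrite (reindex_esum (Q `*`` (fun=> P)) _ (fun x => (x.2, x.1)))//; split=> //=.
- by move=> [i j] [/=].
- by move=> [i1 i2] [j1 j2] /= _ _ [] -> ->.
- by move=> [i1 i2] [Pi1 Qi2] /=; exists (i2, i1).
Qed.

Lemma esum_ge1 (T : choiceType) (S : set T) (a : T -> \bar R) i :
  S i -> (forall j, 0 <= a j) -> a i <= \esum_(j in S) a j.
Proof.
move=> Si a0; apply: esum_ge; exists [set i].
  by split; [exact: finite_set1|move=> j ->].
by rewrite fsbig_set1.
Qed.

Lemma esum_only (T : choiceType) (a : T -> \bar R) i :
  (forall j, j <> i -> a j = 0) -> 0 <= a i ->
  \esum_(j in [set: T]) a j = a i.
Proof.
move=> a0 ai0; rewrite (esumID [set i]); last first.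
  by move=> j _; case: (pselect (j = i)) => [->|/a0->].
rewrite setTI esum_set1// esum1 ?adde0//; by move=> j [_ /a0].
Qed.

End EsumLemmas.

Section Level.
Local Open Scope ereal_scope.
Context (R : realType) (A : pointedType).

Definition lev n : set (seq A) := [set x | size x = n].

Lemma esum_level_succ (f : seq A -> \bar R) n : (forall x, 0 <= f x) ->
  \esum_(y in lev n.+1) f y = \esum_(x in lev n) \esum_(a in [set: A]) f (rcons x a).
Proof.
move=> f0; rewrite (esum_esum (J := fun=> [set: A]))//.
apply: (reindex_esum _ _ (fun p => rcons p.1 p.2)); split.
- by move=> [x a] [/= sx _]; rewrite /lev /= size_rcons sx.
- move=> [x a] [y b] _ _ /= /eqP; rewrite eqseq_rcons => /andP[/eqP-> /eqP->]//.
- move=> y; rewrite /lev /=; case/lastP: y => [//|y a]; rewrite size_rcons => -[sy].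
  by exists (y, a).
Qed.

Lemma esum_level (m : seq A -> \bar R) n : (forall x, 0 <= m x) ->
  (forall x, \esum_(a in [set: A]) m (rcons x a) = m x) ->
  \esum_(x in lev n) m x = m [::].
Proof.
move=> m0 mS; elim: n => [|n IH].
  have -> : lev 0 = [set [::]] by apply/seteqP; split => x; rewrite /lev /=;
    [move/size0nil|move=> ->].
  by rewrite esum_set1.
by rewrite esum_level_succ//; under eq_esum do rewrite mS.
Qed.

End Level.
Section Prefix.
Local Open Scope ereal_scope.
Context (R : realType) (A : pointedType) (cA : countable [set: A]).

Lemma measurable_prefix (G : seq A -> \bar R) n :
  measurable_fun [set: seqspace A] (fun om : seqspace A => G (Defs.prefix om n)).
Proof.
move=> _ B mB; rewrite setTI.
have -> : (fun om : seqspace A => G (Defs.prefix om n)) @^-1` B =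
    \bigcup_(x in [set: seq A])
      ((cyl x : set (seqspace A)) `&` [set _ | size x = n /\ B (G x)]).
  apply/seteqP; split => om.
    move=> /= Bom; exists (Defs.prefix om n) => //; split => //.
      by apply/cylE; rewrite size_prefix.
    by rewrite size_prefix.
  by case=> x _ [/cyl_prefix h [sx Bx]] /=; rewrite -(h _ sx).
apply: countable_bigcupT_measurable; first exact: countable_seq.
move=> x; case: (pselect (size x = n /\ B (G x))) => h.
  rewrite (_ : [set _ | _] = setT) ?setIT; first exact: cyl_measurable.
  by apply/seteqP; split.
by rewrite (_ : [set _ | _] = set0) ?setI0//; apply/seteqP; split.
Qed.

Lemma integral_prefix (mu : {measure set (seqspace A) -> \bar R})
  (G : seq A -> \bar R) n : (forall x, 0 <= G x) ->
  \int[mu]_(om in [set: seqspace A]) G (Defs.prefix om n) =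
  \esum_(x in lev n) (mu (cyl x) * G x).
Proof.
move=> G0.
pose h (x : seq A) (om : seqspace A) :=
  if size x == n then G x * (\1_(cyl x : set (seqspace A)) om)%:E else 0.
have h0 x om : 0 <= h x om.
  by rewrite /h; case: ifP => // _; apply: mule_ge0 => //; rewrite lee_fin.
transitivity (\int[mu]_(om in [set: seqspace A]) \esum_(x in [set: seq A]) h x om).
  apply: eq_integral => om _; rewrite (esum_only (i := Defs.prefix om n))//.
    rewrite /h size_prefix eqxx indicE mem_set ?mule1//.
    by apply/cylE; rewrite size_prefix.
  move=> x hx; rewrite /h; case: eqP => // sx.
  rewrite indicE memNset ?mule0// => /(cyl_prefix _ sx) //.
rewrite integral_esum//; last 2 first.
- exact: countable_seq.
- move=> x; rewrite /h; case: (size x == n); last exact: measurable_cst.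
  apply: measurable_funeM.
  exact: cyl_indicE.
rewrite [RHS]esum_mkcond; apply: eq_esum => x _.
rewrite /h /lev; case: eqP => sx.
  rewrite mem_set// ge0_integralZl//; last first.
    exact: cyl_indicE.
  by rewrite integral_indic ?setIT 1?muleC//; exact: cyl_measurable.
by rewrite memNset// integral0_eq.
Qed.

End Prefix.

Lemma ln_ineq (R : realType) (a b : R) : 0 < a -> 0 < b -> a - b <= a * ln (a / b).
Proof.
move=> a0 b0.
have ba0 : 0 < b / a by rewrite divr_gt0.
have H1 : ln (b / a) <= b / a - 1.
  have := @le_ln1Dx R (b / a - 1); rewrite [1 + _]addrC subrK; apply.
  by rewrite ltrBrDr addNr.
have H2 : a * ln (b / a) <= a * (b / a - 1) := ler_wpM2l (ltW a0) H1.
have H3 : a * (b / a - 1) = b - a.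
  by rewrite mulrBr mulr1 mulrC divfK// gt_eqF.
rewrite -invf_div lnV ?posrE// mulrN.
move: H2; rewrite H3 => H2.
lra.
Qed.
Section EAux.
Local Open Scope ereal_scope.
Lemma ereal_aux (R : realType) (P G : \bar R) (a b c e : R) : 0 <= P -> (0 < a)%R ->
  a%:E * P + b%:E + c%:E = G + c%:E + (a * e)%:E ->
  a%:E * (P - e%:E) + b%:E = G.
Proof.
move=> P0 a0; case: P P0 => [p|_|//] .
- move=> _; case: G => [g||] //= H.
  + have HH : (a * p + b + c = g + c + a * e)%R.
      by apply: EFin_inj; rewrite !EFinD EFinM.
    rewrite -EFinB -EFinM -EFinD; congr EFin; rewrite mulrBr; lra.
- rewrite gt0_muley ?lte_fin// !addye//.
  by case: G => [g||] //=; rewrite -!EFinD.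
Qed.
End EAux.
Section Main.
Local Open Scope ereal_scope.
Variables (A : pointedType) (cA : countable [set: A]) (R : realType)
  (I : choiceType) (cI : countable [set: I])
  (nu : I -> probability (seqspace A) R) (w : I -> R)
  (w_pos : forall i, (0 < w i)%R) (w_le1 : forall i, (w i <= 1)%R)
  (w_sum : \esum_(i in [set: I]) (w i)%:E = 1).

Let V i x := cylm (nu i) x.
Let Xs x := cylm (xi nu w) x.

Lemma fin01 (e : \bar R) : 0 <= e -> e <= 1 -> e = (fine e)%:E.
Proof.
by move=> e0 e1; rewrite fineK// ge0_fin_numE// (le_lt_trans e1)// ltry.
Qed.

Lemma nuE i x : nu i (cyl x) = (V i x)%:E.
Proof. by rewrite /V /cylm -fin01// (probability_le1 _ (cyl_measurable x)). Qed.

Lemma V_ge0 i x : (0 <= V i x)%R.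
Proof. by rewrite -lee_fin -nuE. Qed.

Lemma V_le1 i x : (V i x <= 1)%R.
Proof. by rewrite -lee_fin -nuE (probability_le1 _ (cyl_measurable x)). Qed.

Lemma V_sum i x : \esum_(a in [set: A]) (V i (rcons x a))%:E = (V i x)%:E.
Proof.
under eq_esum do rewrite -nuE.
rewrite -nuE -measure_esum//; last exact: cyl_triv.
- by rewrite -cyl_bigcup.
- by move=> a; exact: cyl_measurable.
Qed.

Lemma V_nil i : V i [::] = 1%R.
Proof. by apply/EFin_inj; rewrite -nuE cyl_nil probability_setT. Qed.

Lemma V_rcons_le i x a : (V i (rcons x a) <= V i x)%R.
Proof.
rewrite -lee_fin -[(V i x)%:E]V_sum.
apply: (esum_ge1 (S := [set: A]) (a := fun b => (V i (rcons x b))%:E) (i := a)) => //.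
by move=> b; rewrite lee_fin V_ge0.
Qed.

Lemma xiE x : xi nu w (cyl x) = \esum_(i in [set: I]) (w i * V i x)%:E.
Proof. by rewrite /xi; apply: eq_esum => i _; rewrite nuE. Qed.

Lemma xi_ge0 x : 0 <= xi nu w (cyl x).
Proof.
rewrite xiE esum_ge0// => i _; rewrite lee_fin mulr_ge0 ?V_ge0//.
exact: ltW.
Qed.

Lemma xi_le1 x : xi nu w (cyl x) <= 1.
Proof.
rewrite xiE -w_sum le_esum// => i _; rewrite lee_fin ler_piMr ?V_le1//.
exact: ltW.
Qed.

Lemma XsE x : xi nu w (cyl x) = (Xs x)%:E.
Proof. by rewrite /Xs /cylm -fin01// ?xi_ge0 ?xi_le1. Qed.

Lemma Xs_ge0 x : (0 <= Xs x)%R.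
Proof. by rewrite -lee_fin -XsE xi_ge0. Qed.

Lemma Xs_ge i x : (w i * V i x <= Xs x)%R.
Proof.
rewrite -lee_fin -XsE xiE.
apply: (esum_ge1 (S := [set: I]) (a := fun j => (w j * V j x)%:E) (i := i)) => //.
by move=> j; rewrite lee_fin mulr_ge0 ?V_ge0// ltW.
Qed.

Lemma Xs_sum x : \esum_(a in [set: A]) (Xs (rcons x a))%:E = (Xs x)%:E.
Proof.
under eq_esum do rewrite -XsE xiE.
rewrite esum_swap; last by move=> *; rewrite lee_fin mulr_ge0 ?V_ge0// ltW.
rewrite -XsE xiE; apply: eq_esum => i _.
under eq_esum do rewrite EFinM.
rewrite esumZl ?V_sum//; last exact: ltW.
by move=> a; rewrite lee_fin V_ge0.
Qed.

Lemma Xs_nil : Xs [::] = 1%R.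
Proof.
apply/EFin_inj; rewrite -XsE xiE -w_sum; apply: eq_esum => i _.
by rewrite V_nil mulr1.
Qed.

Lemma V_level i n : \esum_(x in lev n) (V i x)%:E = 1.
Proof.
rewrite (esum_level (m := fun x => (V i x)%:E)) ?V_nil//.
- by move=> x; rewrite lee_fin V_ge0.
- exact: V_sum.
Qed.

Lemma Xs_level n : \esum_(x in lev n) (Xs x)%:E = 1.
Proof.
rewrite (esum_level (m := fun x => (Xs x)%:E)) ?Xs_nil//.
- by move=> x; rewrite lee_fin Xs_ge0.
- exact: Xs_sum.
Qed.


Lemma maxpn (d : R) : (Num.max d 0 - Num.max (- d) 0 = d)%R.
Proof.
rewrite !maxEle; case: ifP => h1; case: ifP => h2; lra.
Qed.

Lemma Xs_pos i x : (0 < V i x)%R -> (0 < Xs x)%R.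
Proof.
move=> Vp; apply: lt_le_trans (Xs_ge i x); exact: mulr_gt0.
Qed.

Let ell i x := ln (V i x / Xs x).
Let g i x := (V i x * ell i x + Xs x - V i x)%R.

Lemma V_cases i x : V i x = 0%R \/ (0 < V i x)%R.
Proof.
have := V_ge0 i x; rewrite le_eqVlt => /orP[/eqP <-|]; [by left|by right].
Qed.

Lemma g_ge0 i x : (0 <= g i x)%R.
Proof.
rewrite /g /ell; case: (V_cases i x) => [->|Vp].
  by rewrite mul0r add0r subr0 Xs_ge0.
have := ln_ineq Vp (Xs_pos Vp); lra.
Qed.

Lemma g_bound i x : (g i x + V i x <= V i x * (- ln (w i)) + Xs x)%R.
Proof.
rewrite /g /ell; case: (V_cases i x) => [->|Vp].
  by rewrite !mul0r !add0r subr0 addr0.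
have Xp := Xs_pos Vp.
have h : (ln (V i x / Xs x) <= - ln (w i))%R.
  rewrite -lnV ?posrE// ler_ln ?posrE ?invr_gt0 ?divr_gt0//.
  rewrite ler_pdivrMr// mulrC ler_pdivlMr// mulrC; exact: Xs_ge.
have := ler_wpM2l (ltW Vp) h; lra.
Qed.

Lemma g_nil i : g i [::] = 0%R.
Proof. by rewrite /g /ell V_nil Xs_nil divr1 ln1 mulr0 add0r subrr. Qed.

Lemma dKL_tel i x : 0 <= dKL nu w i x /\
  (V i x)%:E * dKL nu w i x + (g i x)%:E =
  \esum_(a in [set: A]) (g i (rcons x a))%:E.
Proof.
case: (V_cases i x) => [V0|Vp].
  have va0 a : V i (rcons x a) = 0%R.
    by apply/eqP; rewrite eq_le V_ge0 andbT -V0 V_rcons_le.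
  have dt0 a : dterm nu w i x a = 0%R.
    rewrite /dterm /condm.
    have -> : cylm (nu i) (rcons x a) = 0%R := va0 a.
    by rewrite !mul0r.
  have -> : dKL nu w i x = 0.
    rewrite /dKL !esum1 ?sube0// => a _; rewrite dt0 ?oppr0 maxxx//.
  split => //; rewrite mule0 add0e /g V0 mul0r add0r subr0.
  under eq_esum do rewrite va0 mul0r add0r subr0.
  by rewrite Xs_sum.
have Xp := Xs_pos Vp.
pose p a := (V i (rcons x a) / V i x)%R.
pose q a := (Xs (rcons x a) / Xs x)%R.
have dE a : dterm nu w i x a = (p a * ln (p a / q a))%R by [].
have p_ge0 a : (0 <= p a)%R by rewrite divr_ge0 ?V_ge0// ltW.
have q_ge0 a : (0 <= q a)%R by rewrite divr_ge0 ?Xs_ge0// ltW.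
have sum_p : \esum_(a in [set: A]) (p a)%:E = 1.
  under eq_esum do rewrite /p mulrC EFinM.
  rewrite esumZl ?V_sum.
  - by rewrite -EFinM mulVf ?gt_eqF.
  - by move=> a; rewrite lee_fin V_ge0.
  - by rewrite invr_ge0 ltW.
have sum_q : \esum_(a in [set: A]) (q a)%:E = 1.
  under eq_esum do rewrite /q mulrC EFinM.
  rewrite esumZl ?Xs_sum.
  - by rewrite -EFinM mulVf ?gt_eqF.
  - by move=> a; rewrite lee_fin Xs_ge0.
  - by rewrite invr_ge0 ltW.
have key a : (p a - q a <= dterm nu w i x a)%R.
  rewrite dE; case: (V_cases i (rcons x a)) => [va0|vap].
    by rewrite /p va0 !mul0r sub0r oppr_le0 q_ge0.
  have sp := Xs_pos vap.
  by apply: ln_ineq; rewrite divr_gt0.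
have dle a : (Num.max (- dterm nu w i x a) 0 <= q a)%R.
  rewrite maxEle; case: ifP => _; first exact: q_ge0.
  have := key a; have := p_ge0 a; lra.
have gibbs a : (Num.max (- dterm nu w i x a) 0 + p a <=
    Num.max (dterm nu w i x a) 0 + q a)%R.
  have := key a; rewrite !maxEle; case: ifP; case: ifP;
    have := p_ge0 a; have := q_ge0 a; lra.
have mx_ge0 (r : R) : (0 <= Num.max r 0)%R by rewrite le_max lexx orbT.
set P := \esum_(a in [set: A]) (Num.max (dterm nu w i x a) 0)%:E.
set N := \esum_(a in [set: A]) (Num.max (- dterm nu w i x a) 0)%:E.
have P0 : 0 <= P by apply: esum_ge0 => a _; rewrite lee_fin.
have N1 : N <= 1 by rewrite -sum_q le_esum // => a _; rewrite lee_fin dle.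
have Nfin : N \is a fin_num.
  by rewrite ge0_fin_numE ?(le_lt_trans N1) ?ltry// esum_ge0// => a _; rewrite lee_fin.
have NP : N <= P.
  have H : \esum_(a in [set: A]) ((Num.max (- dterm nu w i x a) 0)%:E + (p a)%:E) <=
      \esum_(a in [set: A]) ((Num.max (dterm nu w i x a) 0)%:E + (q a)%:E).
    by apply: le_esum => a _; rewrite -!EFinD lee_fin gibbs.
  move: H; rewrite !esumD; try by move=> a _; rewrite lee_fin.
  rewrite sum_p sum_q -/P -/N leeD2rE//.
have dKLE : dKL nu w i x = P - N by [].
split; first by rewrite dKLE suber_ge0.
have ident a : (V i x * Num.max (dterm nu w i x a) 0 + p a * g i x + Xs (rcons x a) =
    g i (rcons x a) + p a * Xs x + V i x * Num.max (- dterm nu w i x a) 0)%R.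
  have hd : (V i x * dterm nu w i x a =
      V i (rcons x a) * ell i (rcons x a) - V i (rcons x a) * ell i x)%R.
    rewrite dE /ell; case: (V_cases i (rcons x a)) => [va0|vap].
      by rewrite /p va0 !mul0r mulr0 subr0.
    have sp := Xs_pos vap.
    have -> : (p a / q a = (V i (rcons x a) / Xs (rcons x a)) / (V i x / Xs x))%R.
      rewrite /p /q; field.
      by rewrite !gt_eqF.
    rewrite ln_div ?posrE ?divr_gt0// /p; field.
    by rewrite gt_eqF.
  have hp : (p a * V i x = V i (rcons x a))%R by rewrite /p divfK ?gt_eqF.
  have hm : (V i x * Num.max (dterm nu w i x a) 0 - V i x * Num.max (- dterm nu w i x a) 0
      = V i x * dterm nu w i x a)%R by rewrite -mulrBr maxpn.
  have hp2 : (p a * (V i x * ell i x) = V i (rcons x a) * ell i x)%R.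
    by rewrite mulrA hp.
  rewrite /g !mulrDr mulrN hp2 hp.
  lra.
have L : \esum_(a in [set: A])
    ((V i x * Num.max (dterm nu w i x a) 0 + p a * g i x + Xs (rcons x a))%R)%:E
    = (V i x)%:E * P + (g i x)%:E + (Xs x)%:E.
  under eq_esum do rewrite !EFinD.
  rewrite esumD; last 2 first.
  - by move=> a _; rewrite -EFinD lee_fin addr_ge0// mulr_ge0// ?V_ge0 ?g_ge0.
  - by move=> a _; rewrite lee_fin Xs_ge0.
  rewrite esumD; last 2 first.
  - by move=> a _; rewrite lee_fin mulr_ge0// ?V_ge0.
  - by move=> a _; rewrite lee_fin mulr_ge0// ?g_ge0.
  rewrite Xs_sum; congr (_ + _ + _).
  - under eq_esum do rewrite EFinM.
    by rewrite esumZl ?V_ge0// => a; rewrite lee_fin.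
  - under eq_esum do rewrite mulrC EFinM.
    by rewrite esumZl ?sum_p ?mule1 ?g_ge0// => a; rewrite lee_fin.
have Rr : \esum_(a in [set: A])
    ((g i (rcons x a) + p a * Xs x + V i x * Num.max (- dterm nu w i x a) 0)%R)%:E
    = \esum_(a in [set: A]) (g i (rcons x a))%:E + (Xs x)%:E + (V i x)%:E * N.
  under eq_esum do rewrite !EFinD.
  rewrite esumD; last 2 first.
  - by move=> a _; rewrite -EFinD lee_fin addr_ge0// ?g_ge0// mulr_ge0// ?Xs_ge0.
  - by move=> a _; rewrite lee_fin mulr_ge0// ?V_ge0.
  rewrite esumD; last 2 first.
  - by move=> a _; rewrite lee_fin g_ge0.
  - by move=> a _; rewrite lee_fin mulr_ge0// ?Xs_ge0.
  congr (_ + _ + _).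
  - under eq_esum do rewrite mulrC EFinM.
    by rewrite esumZl ?sum_p ?mule1 ?Xs_ge0// => a; rewrite lee_fin.
  - under eq_esum do rewrite EFinM.
    by rewrite esumZl ?V_ge0// => a; rewrite lee_fin.
have E1 : (V i x)%:E * P + (g i x)%:E + (Xs x)%:E =
    \esum_(a in [set: A]) (g i (rcons x a))%:E + (Xs x)%:E + (V i x * fine N)%:E.
  rewrite -L EFinM (fineK Nfin) -Rr; apply: eq_esum => a _; by rewrite ident.
rewrite dKLE -(fineK Nfin); exact: ereal_aux P0 Vp E1.
Qed.

Lemma lev0 : lev 0 = [set [::] : seq A].
Proof.
by apply/seteqP; split => x; rewrite /lev /=; [move/size0nil|move=> ->].
Qed.

Let hh i n := \esum_(x in lev n) ((V i x)%:E * dKL nu w i x).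

Lemma Vd_ge0 i x : 0 <= (V i x)%:E * dKL nu w i x.
Proof. by apply: mule_ge0; [rewrite lee_fin V_ge0|exact: (dKL_tel i x).1]. Qed.

Lemma hh_ge0 i n : 0 <= hh i n.
Proof. by apply: esum_ge0 => x _; exact: Vd_ge0. Qed.

Lemma tel_sum i N : \sum_(0 <= n < N) hh i n = \esum_(x in lev N) (g i x)%:E.
Proof.
elim: N => [|N IH].
  by rewrite big_nil lev0 esum_set1 ?g_nil// lee_fin g_ge0.
rewrite big_nat_recr //= IH /hh -esumD; last 2 first.
- by move=> x _; rewrite lee_fin g_ge0.
- by move=> x _; exact: Vd_ge0.
rewrite esum_level_succ; last by move=> x; rewrite lee_fin g_ge0.
by apply: eq_esum => x _; rewrite addeC (dKL_tel i x).2.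
Qed.

Lemma lev_bound i N : \esum_(x in lev N) (g i x)%:E <= (- ln (w i))%:E.
Proof.
have H : \esum_(x in lev N) ((g i x)%:E + (V i x)%:E) <=
    \esum_(x in lev N) ((- ln (w i))%:E * (V i x)%:E + (Xs x)%:E).
  by apply: le_esum => x _; rewrite -EFinM -!EFinD lee_fin mulrC g_bound.
move: H; rewrite !esumD; try by move=> x _; rewrite ?lee_fin ?g_ge0 ?V_ge0 ?Xs_ge0.
- rewrite esumZl ?V_level ?Xs_level ?mule1 ?leeD2rE//.
  + by move=> x; rewrite lee_fin V_ge0.
  + by rewrite oppr_ge0 ln_le0.
- move=> x _; rewrite mule_ge0// lee_fin ?V_ge0//.
  by rewrite oppr_ge0 ln_le0.
Qed.

Lemma series_bound i : \sum_(n <oo) hh i n <= (- ln (w i))%:E.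
Proof.
apply: lime_le; first by apply: is_cvg_nneseries => n _ _; exact: hh_ge0.
by apply: nearW => n; rewrite tel_sum lev_bound.
Qed.


Let K x := \esum_(i in [set: I]) (post nu w i x)%:E * dKL nu w i x.

Lemma post_ge0 i x : (0 <= post nu w i x)%R.
Proof.
by rewrite /post divr_ge0 ?Xs_ge0// mulr_ge0 ?V_ge0// ltW.
Qed.

Lemma K_ge0 x : 0 <= K x.
Proof.
apply: esum_ge0 => i _; apply: mule_ge0; first by rewrite lee_fin post_ge0.
exact: (dKL_tel i x).1.
Qed.

Lemma c_ge0 t om : 0 <= c nu w t om.
Proof. exact: K_ge0. Qed.

Lemma c_meas t : measurable_fun [set: seqspace A] (c nu w t).
Proof.
have -> : c nu w t = fun om => K (Defs.prefix om t.-1) by [].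
exact: (measurable_prefix cA K t.-1). Qed.

Lemma CinfE om : Cinf nu w om = \sum_(n <oo) c nu w n.+1 om.
Proof.
transitivity (\sum_(i <oo) (fun t => c nu w t om) (i + 1)%N).
  by symmetry; apply: (@nneseries_addn R (fun t => c nu w t om) 1) => n; exact: c_ge0.
by apply: congr_lim; apply/funext => n; apply: eq_bigr => k _; rewrite addn1.
Qed.

Lemma Cinf_meas : measurable_fun [set: seqspace A] (Cinf nu w).
Proof.
have -> : Cinf nu w = fun om => \sum_(n <oo | n \in xpredT) c nu w n.+1 om.
  by apply/funext => om; rewrite CinfE.
exact: (ge0_emeasurable_sum (h := fun n om => c nu w n.+1 om) (P := xpredT)
  (fun k x _ _ => c_ge0 k.+1 x) (fun k _ => c_meas k.+1)).
Qed.

Lemma bound_term m x : (V m x)%:E * K x <=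
  ((w m)^-1)%:E * \esum_(i in [set: I]) ((w i)%:E * ((V i x)%:E * dKL nu w i x)).
Proof.
have [X0|Xp] := eqVneq (Xs x) 0%R.
  have Vm0 : V m x = 0%R.
    apply/eqP; rewrite eq_le V_ge0 andbT.
    have := Xs_ge m x; rewrite X0 => h.
    by rewrite -(pmulr_rle0 _ (w_pos m)).
  rewrite Vm0 mul0e; apply: mule_ge0; first by rewrite lee_fin invr_ge0 ltW.
  apply: esum_ge0 => i _; apply: mule_ge0; last exact: Vd_ge0.
  by rewrite lee_fin ltW.
have Xpos : (0 < Xs x)%R by rewrite lt0r Xp Xs_ge0.
have KX : (Xs x)%:E * K x =
    \esum_(i in [set: I]) ((w i)%:E * ((V i x)%:E * dKL nu w i x)).
  rewrite -esumZl ?(ltW Xpos)//; last first.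
    by move=> i; apply: mule_ge0; [rewrite lee_fin post_ge0|exact: (dKL_tel i x).1].
  apply: eq_esum => i _; rewrite !muleA -!EFinM; congr (_ * _); congr EFin.
  have -> : post nu w i x = (w i * V i x / Xs x)%R by [].
  by field; rewrite gt_eqF.
rewrite -KX muleA -EFinM lee_wpmul2r ?K_ge0// lee_fin.
rewrite mulrC ler_pdivlMr// mulrC; exact: Xs_ge.
Qed.


Lemma Ent_ge0 : 0 <= Ent w.
Proof.
apply: esum_ge0 => i _; rewrite lee_fin -mulrN mulr_ge0 ?(ltW (w_pos i))//.
by rewrite oppr_ge0 ln_le0.
Qed.

Lemma int_Cinf m :
  \int[nu m]_(om in [set: seqspace A]) Cinf nu w om <= ((w m)^-1)%:E * Ent w.
Proof.
have F0 i x : 0 <= (w i)%:E * ((V i x)%:E * dKL nu w i x).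
  by apply: mule_ge0; [rewrite lee_fin ltW|exact: Vd_ge0].
have E0 x : 0 <= \esum_(i in [set: I]) ((w i)%:E * ((V i x)%:E * dKL nu w i x)).
  by apply: esum_ge0 => i _.
have -> : \int[nu m]_(om in [set: seqspace A]) Cinf nu w om =
    \int[nu m]_(om in [set: seqspace A]) \sum_(n <oo) c nu w n.+1 om.
  by apply: eq_integral => om _; exact: CinfE.
rewrite integral_nneseries//; last 2 first.
- by move=> n; exact: c_meas.
- by move=> n x _; exact: c_ge0.
have int_c n : \int[nu m]_(om in [set: seqspace A]) c nu w n.+1 om =
    \esum_(x in lev n) ((V m x)%:E * K x).
  have -> : c nu w n.+1 = fun om => K (Defs.prefix om n) by [].
  rewrite (integral_prefix cA (nu m) n K_ge0).
  by apply: eq_esum => x _; congr (_ * _); exact: nuE.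
rewrite (eq_eseriesr (fun n _ => int_c n)).
apply: le_trans (lee_nneseries (v := fun n => \esum_(x in lev n)
    (((w m)^-1)%:E * \esum_(i in [set: I]) ((w i)%:E * ((V i x)%:E * dKL nu w i x))))
    _ _) _.
- move=> n _ _; apply: esum_ge0 => x _; apply: mule_ge0; first by rewrite lee_fin V_ge0.
  exact: K_ge0.
- by move=> n _; apply: le_esum => x _; exact: bound_term.
rewrite (@eq_eseriesr R _ (fun n => ((w m)^-1)%:E * \esum_(x in lev n)
    \esum_(i in [set: I]) ((w i)%:E * ((V i x)%:E * dKL nu w i x)))); last first.
  by move=> n _; rewrite esumZl// invr_ge0 ltW.
rewrite nneseriesZl; last by move=> n _; apply: esum_ge0 => x _.
rewrite lee_wpmul2l// ?lee_fin ?invr_ge0 ?(ltW (w_pos m))//.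
rewrite nneseries_esumT; last by move=> n; apply: esum_ge0 => x _.
rewrite (eq_esum (b := fun n => \esum_(i in [set: I]) \esum_(x in lev n)
    ((w i)%:E * ((V i x)%:E * dKL nu w i x)))); last first.
  by move=> n _; rewrite esum_swap.
rewrite esum_swap; last by move=> n i; apply: esum_ge0 => x _.
apply: le_esum => i _.
rewrite (eq_esum (b := fun n => (w i)%:E * hh i n)); last first.
  by move=> n _; rewrite esumZl; [|exact: Vd_ge0|exact: ltW].
rewrite esumZl; [|by move=> n; exact: hh_ge0|exact: ltW].
rewrite -nneseries_esumT; last by move=> n; exact: hh_ge0.
rewrite -mulrN EFinM lee_wpmul2l ?lee_fin ?(ltW (w_pos i))//.
exact: series_bound.
Qed.


Lemma Cinf_ge0 om : 0 <= Cinf nu w om.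
Proof. by rewrite CinfE; apply: nneseries_ge0 => n _ _; exact: c_ge0. Qed.

Lemma ae_part m : Ent w < +oo ->
  {ae nu m, forall om, (c nu w t om @[t --> \oo] --> 0)}.
Proof.
move=> hEnt.
have Efin : Ent w \is a fin_num by rewrite ge0_fin_numE// Ent_ge0.
have fin : ((w m)^-1)%:E * Ent w < +oo by rewrite -(fineK Efin) -EFinM ltry.
have integ : (nu m).-integrable [set: seqspace A] (Cinf nu w).
  apply/integrableP; split; first exact: Cinf_meas.
  have -> : \int[nu m]_(om in [set: seqspace A]) `|Cinf nu w om| =
      \int[nu m]_(om in [set: seqspace A]) Cinf nu w om.
    by apply: eq_integral => om _; rewrite gee0_abs// Cinf_ge0.
  exact: le_lt_trans (int_Cinf m) fin.
apply: filterS (integrable_ae measurableT integ) => om /(_ Logic.I) Cfin.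
rewrite -cvg_shiftS /=.
have ftot : \sum_(0 <= k <oo | true) c nu w k.+1 om < +oo.
  by rewrite -CinfE -ge0_fin_numE// Cinf_ge0.
have tail := nneseries_tail_cvg ftot (fun k _ => c_ge0 k.+1 om).
apply: (@squeeze_cvge _ _ _ _ (fun=> 0) _ _ _ _ (cvg_cst 0) tail).
apply: nearW => N; rewrite c_ge0 /=.
have := @nneseries_lim_ge R (fun k => c nu w k.+1 om) xpredT N N.+1
  (fun k _ _ => c_ge0 k.+1 om).
by rewrite big_nat1.
Qed.

End Main.
Unset Implicit Arguments.

Theorem theorem4 (A : pointedType) (hA : countable [set: A])
  (R : realType) (I : choiceType) (hI : countable [set: I])
  (nu : I -> probability (seqspace A) R) (nu_inj : injective nu)
  (w : I -> R) (w_pos : forall i, 0 < w i) (w_le1 : forall i, w i <= 1)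
  (w_sum : (\esum_(i in [set: I]) (w i)%:E = 1)%E)
  (m : I)
  (hEnt : (Ent w < +oo)%E) :
  (\int[nu m]_(om in [set: seqspace A]) Cinf nu w om
     <= Ent w * ((w m)^-1)%:E)%E
  /\ {ae nu m, forall om, (c nu w t om @[t --> \oo] --> 0%E)}.
Proof.
split.
  by rewrite muleC; exact: (int_Cinf hA nu w_pos w_le1 w_sum m).
exact: (ae_part hA nu w_pos w_le1 w_sum m hEnt).
Qed.
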